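(* Let $X$ be a locally finite poset with unique minimal element $0$ which is a complete lattice equipped with a conjugation $x\mapsto\overline{x}$, let $L^+$ be a totally ordered set with bottom $\mathbb{O}$ and top $\mathbb{1}$ equipped with a conjugation $a\mapsto\overline{a}$, let $g:X\to L^+$ be isotone and let $\overline{g}(x):=\overline{g(\overline{x})}$. Then: (i) $\mathscr{C}(\overline{g})=\{\overline{C}: C\in\mathscr{C}(g)\}$, where for $C=\{c_1<\cdots<c_l\}$ one sets $\overline{C}=\{\overline{c_l}<\cdots<\overline{c_1}\}$, and the value of $\overline{C}$ is $\overline{g}(\overline{C})=\overline{g(C)}$; (ii) for every $x\in X$: $m^{\overline{g}}(x)=\mathbb{O}$ if $x$ lies in some $\overline{C}\in\mathscr{C}(\overline{g})$ and $x\ne\overline{C}_*$; $m^{\overline{g}}(x)=\overline{m^g(C_* )}$ if $x=\overline{C}_*$ for some $\overline{C}\in\mathscr{C}(\overline{g})$ (with $C$ the corresponding $g$-chain); and $m^{\overline{g}}(x)=\overline{m^g(\overline{x})}$ otherwise.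
   Context: A conjugation on a lattice is a bijective order-reversing map $a\mapsto\overline{a}$ with $\overline{\overline{a}}=a$. Locally finite: every interval is finite; $y\prec x$ means $x$ covers $y$. For isotone $h:X\to L^+$, its canonical Möbius transform is $m^h(x)=h(x)$ if $h(x)>h(y)$ for all $y\prec x$, and $m^h(x)=\mathbb{O}$ otherwise. An $h$-chain is a chain $C\subseteq X$ with at least two elements on which $h$ is constant and which is maximal for inclusion among chains on which $h$ is constant; its value $h(C)$ is the common value, $C_*$ its minimal element; $\mathscr{C}(h)$ is the set of $h$-chains. Under the present assumptions every $h$-chain is finite. *)

(* Defs.v *)
From HB Require Import structures.
From mathcomp Require Import all_boot all_order.
From Stdlib Require Import ClassicalEpsilon.
Set Implicit Arguments. Unset Strict Implicit. Unset Printing Implicit Defensive.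
Import Order.TTheory.
Local Open Scope order_scope.

Section Defs.
Context {dX : Order.disp_t} {X : porderType dX}.

Definition locally_finite : Prop :=
  forall a b : X, exists s : seq X, forall x, a <= x -> x <= b -> x \in s.

Definition minimal (x : X) : Prop := forall y, y <= x -> y = x.

Definition unique_minimal (z : X) : Prop :=
  minimal z /\ forall y, minimal y -> y = z.

Definition is_lub (S : X -> Prop) (u : X) : Prop :=
  (forall x, S x -> x <= u) /\ (forall v, (forall x, S x -> x <= v) -> u <= v).
Definition is_glb (S : X -> Prop) (u : X) : Prop :=
  (forall x, S x -> u <= x) /\ (forall v, (forall x, S x -> v <= x) -> v <= u).

Definition complete_lattice : Prop :=
  forall S : X -> Prop, (exists u, is_lub S u) /\ (exists u, is_glb S u).

Definition covers (y x : X) : Prop := y < x /\ ~ (exists z, y < z /\ z < x).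

Definition is_chain (C : X -> Prop) : Prop :=
  forall x y, C x -> C y -> (x <= y) \/ (y <= x).

Definition is_min (C : X -> Prop) (x : X) : Prop :=
  C x /\ forall y, C y -> x <= y.

Definition img (c : X -> X) (C : X -> Prop) : X -> Prop :=
  fun y => exists x, C x /\ y = c x.

Context {dL : Order.disp_t} {L : tbOrderType dL}.

Definition constant_on (h : X -> L) (C : X -> Prop) : Prop :=
  forall x y, C x -> C y -> h x = h y.

Definition hchain (h : X -> L) (C : X -> Prop) : Prop :=
  [/\ is_chain C,
      (exists x y, C x /\ C y /\ x <> y),
      constant_on h C &
      forall D : X -> Prop, is_chain D -> constant_on h D ->
        (forall x, C x -> D x) -> (forall x, D x -> C x)].

Definition moebius (h : X -> L) (x : X) : L :=
  if excluded_middle_informative (forall y, covers y x -> h y < h x)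
  then h x else \bot.

End Defs.

Definition isotone {dX dL} {X : porderType dX} {L : porderType dL}
  (f : X -> L) : Prop := forall x y, x <= y -> f x <= f y.

Definition conjugation {d} {T : porderType d} (c : T -> T) : Prop :=
  (forall x, c (c x) = x) /\ (forall x y, x <= y -> c y <= c x).

(* Main.v *)
Require Import Defs.
From mathcomp Require Import all_boot all_order.
From mathcomp Require Import zify.
From Stdlib Require Import ClassicalEpsilon Classical FunctionalExtensionality PropExtensionality.
Local Open Scope order_scope.
Import Order.TTheory.

Definition pb (P : Prop) : bool := if excluded_middle_informative P then true else false.
Lemma pbP (P : Prop) : pb P <-> P.
Proof. rewrite /pb; case: excluded_middle_informative => //. Qed.

Lemma count_le_sub (T : eqType) (p q : pred T) (l : seq T) :
  (forall x, p x -> q x) -> (count p l <= count q l)%N.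
Proof.
move=> H; elim: l => //= a l IH.
have : (p a <= q a)%N by case: (p a) (H a) => // ->.
lia.
Qed.

Lemma count_lt_sub (T : eqType) (p q : pred T) (l : seq T) w :
  (forall x, p x -> q x) -> w \in l -> q w -> ~~ p w -> (count p l < count q l)%N.
Proof.
move=> H; elim: l => //= a l IH; rewrite in_cons => /orP [/eqP ->|wl] qw pw.
  rewrite qw (negbTE pw) /=. have := @count_le_sub _ p q l H. lia.
have := IH wl qw pw.
have : (p a <= q a)%N by case: (p a) (H a) => // ->.
lia.
Qed.

Section S.
Context {dX : Order.disp_t} {X : porderType dX} {dL : Order.disp_t} {L : tbOrderType dL}.

Lemma ext_chain (s : seq X) (Hs : forall x, x \in s) (h : X -> L) :
  forall n (D : X -> Prop),
  (size s - count (fun x => pb (D x)) s <= n)%N ->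
  is_chain D -> constant_on h D -> (exists x y, D x /\ D y /\ x <> y) ->
  exists M, hchain h M /\ forall x, D x -> M x.
Proof.
elim=> [|n IH] D Hn Hc Hk H2;
  (case: (classic (forall E : X -> Prop, is_chain E -> constant_on h E ->
        (forall x, D x -> E x) -> (forall x, E x -> D x))) => Hm;
   [by exists D; split => //; split | ]);
  (have [E [Ec [Ek [DE nED]]]] : exists E : X -> Prop, is_chain E /\ constant_on h E /\
        (forall x, D x -> E x) /\ exists w, E w /\ ~ D w by
     apply: NNPP => Hn'; apply: Hm => E Ec Ek DE w Ew;
     apply: NNPP => nDw; apply: Hn'; exists E; split => //; split => //; split => //;
     by exists w);
  case: nED => w [Ew nDw];
  (have Hlt : (count (fun x => pb (D x)) s < count (fun x => pb (E x)) s)%N by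
     apply: (@count_lt_sub _ _ _ s w) => //;
       [ move=> x /pbP Dx; apply/pbP; exact: DE
       | exact/pbP
       | apply/negP => /pbP]);
  have := count_size (fun x => pb (E x)) s.
  lia.
move=> Hsz.
have [M [HM EM]] : exists M, hchain h M /\ forall x, E x -> M x.
  apply: IH => //; first lia.
  case: H2 => x [y [Dx [Dy xy]]]; exists x, y; split; [exact: DE|split; [exact: DE|done]].
exists M; split => // x Dx; exact/EM/DE.
Qed.

Lemma ext_cover (s : seq X) (Hs : forall x, x \in s) (x : X) :
  forall n d, (count (fun w => ((d < w) && (w < x))%O) s <= n)%N -> d < x ->
  exists c, covers c x /\ d <= c.
Proof.
elim=> [|n IH] d Hn dx;
  (case: (classic (exists z, d < z /\ z < x)) => Hz;
   [ | by exists d; split => //; split]);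
  case: Hz => z [dz zx];
  (have Hlt : (count (fun w => ((z < w) && (w < x))%O) s < count (fun w => ((d < w) && (w < x))%O) s)%N by
     apply: (@count_lt_sub _ _ _ s z) => //;
       [ move=> y /andP [zy yx]; rewrite yx andbT; exact: lt_trans zy
       | rewrite dz zx
       | rewrite ltxx]).
  lia.
have [c [cc zc]] := IH z ltac:(lia) zx.
exists c; split => //; apply: le_trans zc; exact: ltW.
Qed.

Lemma conj_inj {d} {T : porderType d} (c : T -> T) : conjugation c -> injective c.
Proof. move=> [inv _] a b e; by rewrite -(inv a) e inv. Qed.

Lemma hchain_conj (cX : X -> X) (cL : L -> L) (h : X -> L) D :
  conjugation cX -> conjugation cL -> hchain h D ->
  hchain (fun x => cL (h (cX x))) (img cX D).
Proof.
move=> CX CL [Dc D2 Dk Dm].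
have [invX monX] := CX; have [invL monL] := CL.
split.
- move=> _ _ [a [Da ->]] [b [Db ->]].
  case: (Dc a b Da Db) => ab; [right|left]; exact: monX.
- case: D2 => a [b [Da [Db ab]]]; exists (cX a), (cX b); split; [by exists a|split; [by exists b|]].
  by move=> /(@conj_inj _ _ cX CX).
- move=> _ _ [a [Da ->]] [b [Db ->]]; rewrite !invX; by rewrite (Dk a b Da Db).
- move=> E Ec Ek DE w Ew.
  have H : forall x, (img cX E) x -> D x.
    apply: (Dm (img cX E)).
    + move=> _ _ [a [Ea ->]] [b [Eb ->]].
      case: (Ec a b Ea Eb) => ab; [right|left]; exact: monX.
    + move=> _ _ [a [Ea ->]] [b [Eb ->]]; apply: (@conj_inj _ _ cL CL); exact: Ek.
    + move=> x Dx; exists (cX x); split; last by rewrite invX.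
      apply: DE; by exists x.
  exists (cX w); split; last by rewrite invX.
  apply: H; by exists w.
Qed.

End S.

Theorem proposition7 (dX : Order.disp_t) (X : porderType dX)
    (dL : Order.disp_t) (L : tbOrderType dL)
    (cX : X -> X) (cL : L -> L) (g : X -> L) (zero : X) :
  @locally_finite _ X -> unique_minimal zero -> @complete_lattice _ X ->
  conjugation cX -> conjugation cL -> isotone g ->
  let gbar := fun x => cL (g (cX x)) in
  (* (i) *)
  (forall D : X -> Prop, hchain gbar D <-> exists C, hchain g C /\ D = img cX C) /\
  (forall C : X -> Prop, hchain g C ->
     forall x y, img cX C x -> C y -> gbar x = cL (g y)) /\
  (* (ii) *)
  (forall x : X,
     ((exists D, hchain gbar D /\ D x /\ ~ is_min D x) ->
        moebius gbar x = \bot) /\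
     (forall C : X -> Prop, hchain g C -> is_min (img cX C) x ->
        forall cs, is_min C cs -> moebius gbar x = cL (moebius g cs)) /\
     (~ (exists D, hchain gbar D /\ D x /\ ~ is_min D x) ->
      ~ (exists D, hchain gbar D /\ is_min D x) ->
        moebius gbar x = cL (moebius g (cX x)))).
Proof.
move=> LF _ CLat CX CL giso gbar.
have [invX monX] := CX; have [invL monL] := CL.
have [s Hs] : exists s : seq X, forall x, x \in s.
  have [[t [Ht _]] [b [Hb _]]] := CLat (fun _ => True).
  have [s Hs] := LF b t; exists s => x; apply: Hs; [exact: Hb|exact: Ht].
have gbiso : forall a b, a <= b -> gbar a <= gbar b.
  move=> a b ab; apply: monL; apply: giso; exact: monX.
have gbb : (fun x => cL (gbar (cX x))) = g.
  apply: functional_extensionality => x; by rewrite /gbar invX invL.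
have imgK : forall D, img cX (img cX D) = D.
  move=> D; apply: functional_extensionality => x; apply: propositional_extensionality.
  split.
  - by move=> [_ [[y [Dy ->]] ->]]; rewrite invX.
  - move=> Dx; exists (cX x); split; last by rewrite invX.
    by exists x.
have extc := fun h => @ext_chain _ _ _ _ s Hs h (size s).
have extc' : forall (h : X -> L) D, is_chain D -> constant_on h D ->
    (exists x y, D x /\ D y /\ x <> y) -> exists M, hchain h M /\ forall x, D x -> M x.
  move=> h D; apply: extc; lia.
have cover : forall d x : X, d < x -> exists c, covers c x /\ d <= c.
  move=> d x dx; exact: (@ext_cover _ _ s Hs x (size s) d (count_size _ _) dx).
split.
  move=> D; split.
  - move=> HD; exists (img cX D); split; last by rewrite imgK.
    have := @hchain_conj _ _ _ _ cX cL gbar D CX CL HD; by rewrite gbb.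
  - move=> [C [HC ->]]; exact: (@hchain_conj _ _ _ _ cX cL g C CX CL HC).
split.
  move=> C [_ _ Ck _] _ y [c [Cc ->]] Cy; rewrite /gbar invX; by rewrite (Ck c y Cc Cy).
move=> x; split.
  move=> [D [[Dc _ Dk _] [Dx nmin]]].
  have [y [Dy nxy]] : exists y, D y /\ ~ x <= y.
    apply: NNPP => H; apply: nmin; split => // y Dy; apply: NNPP => nxy; apply: H; by exists y.
  have yx : y < x.
    case: (Dc x y Dx Dy) => // yx; rewrite lt_neqAle yx andbT.
    apply/negP => /eqP e; apply: nxy; by rewrite e.
  have [c [Hcov yc]] := cover y x yx.
  rewrite /moebius; case: excluded_middle_informative => // Hm.
  have H := Hm c Hcov; rewrite (Dk x y Dx Dy) in H.
  by have := lt_le_trans H (gbiso _ _ yc); rewrite ltxx.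
split.
  move=> C [Cc C2 Ck Cm] [[c [Cc0 ->]] Hmin] cs [Ccs Hcs].
  have cmax : forall y, C y -> y <= c.
    move=> y Cy; have := Hmin (cX y) (ex_intro _ y (conj Cy erefl)).
    by move=> /monX; rewrite !invX.
  have m1 : moebius gbar (cX c) = gbar (cX c).
    rewrite /moebius; case: excluded_middle_informative => // Hn; exfalso; apply: Hn => y [yx _].
    rewrite lt_neqAle gbiso ?(ltW yx) // andbT; apply/negP => /eqP e.
    have e' : g (cX y) = g c.
      apply: (@conj_inj _ _ cL CL); rewrite /gbar in e; by rewrite invX in e.
    have cz : c < cX y.
      rewrite lt_neqAle; have := monX _ _ (ltW yx); rewrite invX => ->; rewrite andbT.
      apply/negP => /eqP e2; move: yx; by rewrite e2 invX ltxx.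
    have Cz : C (cX y).
      apply: (Cm (fun w => C w \/ w = cX y)); last by right.
      + move=> a b [Ca|->] [Cb|->]; first exact: Cc.
        * left; apply: le_trans (cmax a Ca) (ltW cz).
        * right; apply: le_trans (cmax b Cb) (ltW cz).
        * by left.
      + move=> a b [Ca|->] [Cb|->]; first exact: Ck.
        * by rewrite (Ck a c Ca Cc0) e'.
        * by rewrite (Ck b c Cb Cc0) e'.
        * by [].
      + by move=> w Cw; left.
    by have := lt_le_trans cz (cmax _ Cz); rewrite ltxx.
  have m2 : moebius g cs = g cs.
    rewrite /moebius; case: excluded_middle_informative => // Hn; exfalso; apply: Hn => y [ycs _].
    rewrite lt_neqAle giso ?(ltW ycs) // andbT; apply/negP => /eqP e.
    have Cy : C y.
      apply: (Cm (fun w => C w \/ w = y)); last by right.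
      + move=> a b [Ca|->] [Cb|->]; first exact: Cc.
        * right; apply: le_trans (ltW ycs) (Hcs a Ca).
        * left; apply: le_trans (ltW ycs) (Hcs b Cb).
        * by left.
      + move=> a b [Ca|->] [Cb|->]; first exact: Ck.
        * by rewrite (Ck a cs Ca Ccs) e.
        * by rewrite (Ck b cs Cb Ccs) e.
        * by [].
      + by move=> w Cw; left.
    by have := lt_le_trans ycs (Hcs _ Cy); rewrite ltxx.
  by rewrite m1 m2 /gbar invX (Ck c cs).
move=> H1 H2.
have nin : forall D, hchain gbar D -> ~ D x.
  move=> D HD Dx; case: (classic (is_min D x)) => m.
  - by apply: H2; exists D.
  - by apply: H1; exists D.
have key : forall y, (y <= x \/ x <= y) -> y <> x -> gbar y = gbar x -> False.
  move=> y cmp nyx e.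
  have [M [HM DM]] : exists M, hchain gbar M /\ forall w, (w = y \/ w = x) -> M w.
    apply: extc'.
  - move=> a b [->|->] [->|->]; by [left|right|case: cmp; [left|right]|case: cmp; [right|left]].
  - by move=> a b [->|->] [->|->].
  - by exists y, x; split; [left|split; [right|]].
  by apply: (nin M HM); apply: DM; right.
have m1 : moebius gbar x = gbar x.
  rewrite /moebius; case: excluded_middle_informative => // Hn; exfalso; apply: Hn => y [yx _].
  rewrite lt_neqAle gbiso ?(ltW yx) // andbT; apply/negP => /eqP e.
  apply: (key y (or_introl (ltW yx))) => // eyx; by move: yx; rewrite eyx ltxx.
have m2 : moebius g (cX x) = g (cX x).
  rewrite /moebius; case: excluded_middle_informative => // Hn; exfalso; apply: Hn => y [yx _].
  rewrite lt_neqAle giso ?(ltW yx) // andbT; apply/negP => /eqP e.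
  apply: (key (cX y)).
  - by right; have := monX _ _ (ltW yx); rewrite invX.
  - move=> eyx; move: yx; by rewrite -eyx invX ltxx.
  - by rewrite /gbar invX e.
by rewrite m1 m2.
Qed.
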